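(* For all $0<b<B$ there exists an instance $\langle A,f,c\rangle$ with $f$ XOS and $p(\{i\})\le b$ for all $i\in A$ such that $$\frac{\textsc{Max-Reward}(B)}{\textsc{Max-Reward}(b)}\ge\frac52.$$
   Context: An instance $\langle A,f,c\rangle$ consists of a finite set $A$ of agents, a monotone nondecreasing $f:2^A\to[0,1]$, and costs $c_i\ge0$. For $S\subseteq A$, $i\in S$: $f_S(i)=f(S)-f(S\setminus\{i\})$; $p(S)=\sum_{i\in S}c_i/f_S(i)$ (conventions: $0$ if $c_i=0=f_S(i)$, $\infty$ if $c_i>0=f_S(i)$). $f$ is XOS if it is the pointwise maximum of finitely many nonnegative additive set functions. $\textsc{Max-Reward}(B)=\max\{f(S):S\subseteq A,\ p(S)\le B\}$. *)

(* Defs.v *)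
From HB Require Import structures.
From mathcomp Require Import all_boot all_order all_algebra.
From mathcomp Require Import reals constructive_ereal.
Set Implicit Arguments. Unset Strict Implicit. Unset Printing Implicit Defensive.
Import Order.TTheory GRing.Theory Num.Theory.
Local Open Scope ring_scope.

Section Defs.
Variables (R : realType) (n : nat).
Variables (f : {set 'I_n} -> R) (c : 'I_n -> R).

Definition fmarg (S : {set 'I_n}) (i : 'I_n) : R := f S - f (S :\ i).

Definition pterm (S : {set 'I_n}) (i : 'I_n) : \bar R :=
  if fmarg S i == 0 then (if c i == 0 then 0%E else +oo%E)
  else (c i / fmarg S i)%:E.

Definition price (S : {set 'I_n}) : \bar R := (\sum_(i in S) pterm S i)%E.

Definition is_instance : Prop :=
  (forall S T : {set 'I_n}, S \subset T -> f S <= f T) /\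
  (forall S : {set 'I_n}, 0 <= f S <= 1) /\
  (forall i, 0 <= c i).

Definition XOS : Prop :=
  exists (k : nat) (w : 'I_k.+1 -> 'I_n -> R),
    (forall j i, 0 <= w j i) /\
    (forall S : {set 'I_n}, (forall j, \sum_(i in S) w j i <= f S) /\
               exists j, f S = \sum_(i in S) w j i).

(* Max-Reward(B) = max { f(S) : p(S) <= B }.  The empty set is always
   feasible for B >= 0 and f >= 0, so the default 0 is harmless. *)
Definition MaxReward (B : R) : R :=
  \big[Num.max/0]_(S : {set 'I_n} | (price S <= B%:E)%E) f S.
End Defs.

(* Main.v *)
Require Import Defs.
From HB Require Import structures.
From mathcomp Require Import all_boot all_order all_algebra.
From mathcomp Require Import reals constructive_ereal.
From mathcomp Require Import ring lra.
Import Order.TTheory GRing.Theory Num.Theory.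
Set Implicit Arguments. Unset Strict Implicit.
Local Open Scope ring_scope.

Definition o0 : 'I_4 := @Ordinal 4 0 isT.
Definition o1 : 'I_4 := @Ordinal 4 1 isT.
Definition o2 : 'I_4 := @Ordinal 4 2 isT.
Definition o3 : 'I_4 := @Ordinal 4 3 isT.

Lemma sum4 (V : nmodType) (F : 'I_4 -> V) : \sum_(i < 4) F i = F o0 + F o1 + F o2 + F o3.
Proof.
rewrite !big_ord_recr big_ord0 /= add0r.
by congr (_ + _ + _ + _); congr F; apply/val_inj.
Qed.

Lemma sum4e (R : realType) (F : 'I_4 -> \bar R) :
  (\sum_(i < 4) F i = F o0 + F o1 + F o2 + F o3)%E.
Proof.
rewrite !big_ord_recr big_ord0 /= add0e.
by congr (_ + _ + _ + _)%E; congr F; apply/val_inj.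
Qed.

Definition Wn (j i : nat) : nat :=
  nth 0 (nth [::] [:: [:: 1; 1; 1; 0]; [:: 1; 2; 1; 2]; [:: 2; 0; 0; 0]] j) i.
Definition Cn (i : nat) : nat := nth 0 [:: 0; 2; 1; 2] i.
Definition cl (j : nat) (s0 s1 s2 s3 : bool) : nat :=
  Nat.add (Nat.add (Nat.add (Nat.mul s0 (Wn j 0)) (Nat.mul s1 (Wn j 1)))
    (Nat.mul s2 (Wn j 2))) (Nat.mul s3 (Wn j 3)).
Definition g (s0 s1 s2 s3 : bool) : nat :=
  Nat.max (cl 0 s0 s1 s2 s3) (Nat.max (cl 1 s0 s1 s2 s3) (cl 2 s0 s1 s2 s3)).
Definition gS (S : {set 'I_4}) : nat := g (o0 \in S) (o1 \in S) (o2 \in S) (o3 \in S).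

Section Inst.
Variables (R : realType) (lam : R).
Definition fX (S : {set 'I_4}) : R := (gS S)%:R / 6.
Definition wX (j : 'I_3) (i : 'I_4) : R := (Wn j i)%:R / 6.
Definition cX (i : 'I_4) : R := lam / 6 * (Cn i)%:R.

Lemma sum_wX (S : {set 'I_4}) (j : 'I_3) : \sum_(i in S) wX j i =
  (cl j (o0 \in S) (o1 \in S) (o2 \in S) (o3 \in S))%:R / 6.
Proof.
rewrite big_mkcond sum4 /wX.
case: j => [[|[|[|//]]] ?]; case: (o0 \in S); case: (o1 \in S);
  case: (o2 \in S); case: (o3 \in S); rewrite /cl /Wn /=; lra.
Qed.

Lemma g_mono s0 s1 s2 s3 t0 t1 t2 t3 : s0 ==> t0 -> s1 ==> t1 -> s2 ==> t2 -> s3 ==> t3 ->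
  (g s0 s1 s2 s3 <= g t0 t1 t2 t3)%N.
Proof. by case: s0; case: s1; case: s2; case: s3; case: t0; case: t1; case: t2; case: t3. Qed.

Lemma gS_mono (S T : {set 'I_4}) : S \subset T -> (gS S <= gS T)%N.
Proof.
move/subsetP=> H; apply: g_mono; apply/implyP; exact: H.
Qed.

Definition ptn (a bb cc : nat) : \bar R :=
  if (Nat.sub a bb == 0)%N then (if cc == 0%N then 0%E else +oo%E)
  else (lam * cc%:R / (Nat.sub a bb)%:R)%:E.

Lemma ptermE (S : {set 'I_4}) i : 0 < lam -> pterm fX cX S i = ptn (gS S) (gS (S :\ i)) (Cn i).
Proof.
move=> lam0.
have le : (gS (S :\ i) <= gS S)%N by apply: gS_mono; apply: subD1set.
have Es : Nat.sub (gS S) (gS (S :\ i)) = (gS S - gS (S :\ i))%N by [].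
rewrite /pterm /fmarg /fX /ptn Es -mulrBl -natrB //.
have -> : ((gS S - gS (S :\ i))%:R / 6 == 0 :> R) = (gS S - gS (S :\ i) == 0)%N.
  by rewrite mulf_eq0 invr_eq0 !pnatr_eq0 orbF.
have -> : (cX i == 0) = (Cn i == 0)%N.
  rewrite /cX mulf_eq0 pnatr_eq0.
  have -> : (lam / 6 == 0) = false by rewrite mulf_eq0 invr_eq0 (gt_eqF lam0) pnatr_eq0.
  by [].
case: eqP => // /eqP H.
congr (_%:E); rewrite /cX; field.
by rewrite pnatr_eq0.
Qed.

Definition PP (s0 s1 s2 s3 : bool) : \bar R :=
  let G := g s0 s1 s2 s3 in
  ((if s0 then ptn G (g false s1 s2 s3) (Cn 0) else 0) +
   (if s1 then ptn G (g s0 false s2 s3) (Cn 1) else 0) +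
   (if s2 then ptn G (g s0 s1 false s3) (Cn 2) else 0) +
   (if s3 then ptn G (g s0 s1 s2 false) (Cn 3) else 0))%E.

Lemma priceE (S : {set 'I_4}) : 0 < lam ->
  price fX cX S = PP (o0 \in S) (o1 \in S) (o2 \in S) (o3 \in S).
Proof.
move=> lam0; rewrite /price (eq_bigr _ (fun i _ => ptermE S i lam0)).
rewrite big_mkcond sum4e /gS !in_setD1 /PP /=.
by case: (o0 \in S); case: (o1 \in S); case: (o2 \in S); case: (o3 \in S).
Qed.

Lemma fsmall b S : 0 < lam -> lam <= b -> b < 2 * lam ->
  (price fX cX S <= b%:E)%E -> fX S <= 1/3.
Proof.
move=> l0 lb bl; rewrite priceE // /fX /gS.
case: (o0 \in S); case: (o1 \in S); case: (o2 \in S); case: (o3 \in S);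
  rewrite /PP /ptn /g /cl /Wn /Cn /=.
all: move=> H; first [lra | (rewrite ?add0e ?adde0 -?EFinD lee_fin in H; lra)].
Qed.

Lemma single b (i : 'I_4) : 0 < lam -> lam <= b -> (price fX cX [set i] <= b%:E)%E.
Proof.
move=> l0 lb; rewrite priceE //.
case: i => [[|[|[|[|//]]]] Hi]; rewrite !inE /PP /ptn /g /cl /Wn /Cn /=;
  rewrite ?add0e ?adde0 -?EFinD lee_fin; lra.
Qed.

Lemma p_o0 b : 0 < lam -> 0 <= b -> (price fX cX [set o0] <= b%:E)%E.
Proof.
move=> l0 lb; rewrite priceE // !inE /PP /ptn /g /cl /Wn /Cn /=.
rewrite ?add0e ?adde0 -?EFinD lee_fin; lra.
Qed.

Lemma p_S B : 0 < lam -> 2 * lam <= B -> (price fX cX [set o0; o1; o3] <= B%:E)%E.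
Proof.
move=> l0 lb; rewrite priceE // !inE /PP /ptn /g /cl /Wn /Cn /=.
rewrite ?add0e ?adde0 -?EFinD lee_fin; lra.
Qed.

Lemma f_o0 : fX [set o0] = 2 / 6.
Proof. by rewrite /fX /gS !inE. Qed.

Lemma f_S : fX [set o0; o1; o3] = 5 / 6.
Proof. by rewrite /fX /gS !inE. Qed.
End Inst.

Theorem mainTheorem14 (R : realType) (b B : R) :
  0 < b -> b < B ->
  exists (n : nat) (f : {set 'I_n} -> R) (c : 'I_n -> R),
    is_instance f c /\ XOS f /\
    (forall i : 'I_n, (price f c [set i] <= b%:E)%E) /\
    0 < MaxReward f c b /\
    5 / 2 <= MaxReward f c B / MaxReward f c b.
Proof.
move=> b0 bB.
have [lam [l0 [lb [bl lB]]]] :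
    exists lam : R, 0 < lam /\ lam <= b /\ b < 2 * lam /\ 2 * lam <= B.
  by case: (lerP (2 * b) B) => h; [exists b | exists (B / 2)]; lra.
exists 4, (@fX R), (cX lam).
have Mb : MaxReward (@fX R) (cX lam) b = 1 / 3.
  apply/eqP; rewrite eq_le; apply/andP; split.
    apply: bigmax_le; first lra.
    by move=> S HS; exact: (fsmall l0 lb bl HS).
  apply: (bigmax_sup [set o0]); first exact: (p_o0 l0 (ltW b0)).
  rewrite f_o0; lra.
have MB : 5 / 6 <= MaxReward (@fX R) (cX lam) B.
  apply: (bigmax_sup [set o0; o1; o3]); first exact: (p_S l0 lB).
  by rewrite f_S.
split; [|split; [|split; [|split]]].
- split; [|split].
  + move=> S T ST; rewrite /fX ler_wpM2r ?invr_ge0 ?ler0n // ler_nat.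
    exact: gS_mono.
  + move=> S; rewrite /fX /gS.
    have : (g (o0 \in S) (o1 \in S) (o2 \in S) (o3 \in S) <= 6)%N.
      by case: (o0 \in S); case: (o1 \in S); case: (o2 \in S); case: (o3 \in S).
    rewrite -(ler_nat R) => H; apply/andP; split; first by rewrite divr_ge0 ?ler0n.
    lra.
  + move=> i; rewrite /cX mulr_ge0 ?ler0n // divr_ge0 //; exact: ltW.
- exists 2, (@wX R); split.
    by move=> j i; rewrite /wX divr_ge0 ?ler0n.
  move=> S; split.
    move=> j; rewrite sum_wX /fX /gS ler_wpM2r ?invr_ge0 ?ler0n // ler_nat.
    by case: j => [[|[|[|//]]] ?]; case: (o0 \in S); case: (o1 \in S);
      case: (o2 \in S); case: (o3 \in S).
  have : [|| gS S == cl 0 (o0 \in S) (o1 \in S) (o2 \in S) (o3 \in S),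
             gS S == cl 1 (o0 \in S) (o1 \in S) (o2 \in S) (o3 \in S) |
             gS S == cl 2 (o0 \in S) (o1 \in S) (o2 \in S) (o3 \in S)].
    by rewrite /gS; case: (o0 \in S); case: (o1 \in S); case: (o2 \in S); case: (o3 \in S).
  case/or3P => /eqP E.
  + by exists (@Ordinal 3 0 isT); rewrite sum_wX /fX E.
  + by exists (@Ordinal 3 1 isT); rewrite sum_wX /fX E.
  + by exists (@Ordinal 3 2 isT); rewrite sum_wX /fX E.
- by move=> i; exact: (single i l0 lb).
- rewrite Mb; lra.
- rewrite Mb.
  have -> : MaxReward (@fX R) (cX lam) B / (1 / 3) = MaxReward (@fX R) (cX lam) B * 3.
    by field.
  lra.
Qed.
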